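(* Let $f:\mathbb{R}^n\to\mathbb{R}$ be convex and continuously differentiable, let $w^*\in\Delta^n$ be a minimizer of $f$ over $\Delta^n$, and let $t\mapsto w^t$ be continuously differentiable in $t$ and satisfy the Cauchy-Simplex gradient flow $$\frac{dw^t}{dt} = -\beta\, w^t\odot\Big(\nabla f(w^t) - \big(w^t\cdot\nabla f(w^t)\big)\mathbb{1}\Big)$$ for a constant $\beta>0$. Then, as long as $w^t\in\operatorname{int}(\Delta^n)$, the relative entropy $$D(w^*\,|\,w^t)=\sum_{i:\,w^*_i\neq 0} w^*_i\log\!\left(\frac{w^*_i}{w^t_i}\right)$$ is a decreasing (non-increasing) function of time.
   Context: $\Delta^n=\{w\in\mathbb{R}^n : \sum_i w_i=1,\ w_i\ge 0\}$ is the probability simplex and $\operatorname{int}(\Delta^n)$ denotes the points of $\Delta^n$ with all coordinates strictly positive. $\odot$ denotes componentwise multiplication and $\mathbb{1}$ the all-ones vector. *)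

(* Defs.v *)
From HB Require Import structures.
From mathcomp Require Import all_boot all_order all_algebra.
From mathcomp Require Import all_classical all_reals all_analysis.
Set Implicit Arguments. Unset Strict Implicit. Unset Printing Implicit Defensive.
Import Order.TTheory GRing.Theory Num.Theory.
Import numFieldNormedType.Exports.
Local Open Scope ring_scope.

(* Vectors of R^n are row vectors 'rV[R]_n; coordinate i of w is w 0 i. *)

Definition basis_vec (R : realType) (n : nat) (i : 'I_n) : 'rV[R]_n :=
  delta_mx 0 i.

Definition grad (R : realType) (n : nat) (f : 'rV[R]_n -> R) (x : 'rV[R]_n)
  : 'rV[R]_n := \row_i ('D_(basis_vec R i) f x).

Definition C1_fun (R : realType) (n : nat) (f : 'rV[R]_n -> R) : Prop :=
  (forall x, differentiable f x) /\ continuous (grad f).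

Definition convex_fun (R : realType) (n : nat) (f : 'rV[R]_n -> R) : Prop :=
  forall (x y : 'rV[R]_n) (l : R), 0 <= l <= 1 ->
    f (l *: x + (1 - l) *: y) <= l * f x + (1 - l) * f y.

Definition in_simplex (R : realType) (n : nat) (w : 'rV[R]_n) : Prop :=
  (\sum_i w 0 i = 1) /\ (forall i, 0 <= w 0 i).

Definition in_int_simplex (R : realType) (n : nat) (w : 'rV[R]_n) : Prop :=
  (\sum_i w 0 i = 1) /\ (forall i, 0 < w 0 i).

Definition dotv (R : realType) (n : nat) (u v : 'rV[R]_n) : R :=
  \sum_i u 0 i * v 0 i.

Definition rel_entropy (R : realType) (n : nat) (ws w : 'rV[R]_n) : R :=
  \sum_(i | ws 0 i != 0) ws 0 i * ln (ws 0 i / w 0 i).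

Definition cs_field (R : realType) (n : nat) (beta : R) (f : 'rV[R]_n -> R)
  (w : 'rV[R]_n) : 'rV[R]_n :=
  \row_i (- beta * (w 0 i * (grad f w 0 i - dotv w (grad f w)))).

(* Main.v *)
Require Import Defs.
From HB Require Import structures.
From mathcomp Require Import all_boot all_order all_algebra.
From mathcomp Require Import all_classical all_reals all_analysis.
From mathcomp Require Import ring lra.
Import Order.TTheory GRing.Theory Num.Theory.
Import numFieldNormedType.Exports.
Local Open Scope ring_scope.
Local Open Scope classical_set_scope.
Lemma coord_is_derive (R : realType) (n : nat) (w : R -> 'rV[R]_n) (u : R) (i : 'I_n) :
  derivable w u 1 -> is_derive u (1:R) (fun x => w x 0 i) ((w^`()%classic u) 0 i).
Proof.
move=> dw.
have cv : (fun h : R => h^-1 *: ((w \o shift u) (h *: (1:R)) - w u)) @ 0^' --> 'D_1 w u.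
  exact: dw.
have cv2 := cvg_comp _ _ cv (@coord_continuous R 1 n 0 i _).
have E : (fun h : R => h^-1 *: (((fun x => w x 0 i) \o shift u) (h *: (1:R)) - w u 0 i))
   = (fun M : 'rV[R]_n => M 0 i) \o (fun h : R => h^-1 *: ((w \o shift u) (h *: (1:R)) - w u)).
  by apply/funext => h /=; rewrite !mxE.
rewrite -E in cv2.
rewrite derive1E.
apply: DeriveDef; first by apply/cvg_ex; eexists; exact: cv2.
exact: cvg_lim cv2.
Qed.

Lemma term_derive (R : realType) (n : nat) (w : R -> 'rV[R]_n) (u : R) (i : 'I_n) (c : R) :
  derivable w u 1 -> 0 < w u 0 i -> 0 < c ->
  is_derive u (1:R) (fun y => c * ln (c / w y 0 i)) (- (c * ((w^`()%classic u) 0 i) / w u 0 i)).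
Proof.
move=> dw wp cp.
have h1 := @coord_is_derive R n w u i dw.
have h2 := is_deriveV (lt0r_neq0 wp) h1.
have h3 := is_deriveZ c h2.
pose g := fun y => c * (w y 0 i)^-1.
have h3' : is_derive u (1:R) g (c *: (- (w u 0 i) ^- 2 *: ((w^`()%classic u) 0 i))) by exact: h3.
have gp : 0 < g u by rewrite /g mulr_gt0 // invr_gt0.
have h4 := is_derive1_comp (is_derive1_ln gp) h3'.
have h5 := is_deriveZ c h4.
pose F := fun y => c * ln (c / w y 0 i).
have h5' : is_derive u (1:R) F (c *: ((g u)^-1 * (c *: (- (w u 0 i) ^- 2 *: ((w^`()%classic u) 0 i))))) by exact: h5.
apply: is_derive_eq h5' _.
rewrite /g /GRing.scale /=.
have wn := lt0r_neq0 wp. have cn := lt0r_neq0 cp.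
field.
by rewrite wn cn.
Qed.
Lemma derive_grad (R : realType) (n : nat) (f : 'rV[R]_n -> R) x v :
  differentiable f x -> 'D_v f x = dotv (grad f x) v.
Proof.
move=> df; rewrite deriveE // {1}(row_sum_delta v) linear_sum /dotv.
apply: eq_bigr => j _; rewrite linearZ /= mxE -deriveE // mulrC.
by [].

Qed.

Lemma convex_D_le (R : realType) (n : nat) (f : 'rV[R]_n -> R) x v :
  convex_fun f -> derivable f x v -> 'D_v f x <= f (x + v) - f x.
Proof.
move=> cf dv.
have cv : (fun h : R => h^-1 *: ((f \o shift x) (h *: v) - f x)) @ 0^' --> 'D_v f x.
  exact: dv.
have cv2 := cvg_dnbhs_at_right cv.
apply: (closed_cvg _ (@closed_le R (f (x + v) - f x)) _ _ cv2).
near=> h.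
have h0 : 0 < h by near: h; exact: nbhs_right_gt.
have h1 : h <= 1 by near: h; exact: nbhs_right_le.
rewrite /= /shift.
have := cf (x + v) x h; rewrite h1 (ltW h0) => /(_ isT).
have -> : h *: (x + v) + (1 - h) *: x = h *: v + x.
  rewrite scalerDr scalerBl scale1r [h *: x + _]addrC -addrA; congr (_ + _).
  by rewrite addrC subrK.
move=> H.
rewrite /GRing.scale /= ler_pdivrMl //.
rewrite lerBlDr (le_trans H) //. 

nra.
Unshelve. all: by end_near.
Qed.

Lemma grad_ineq (R : realType) (n : nat) (f : 'rV[R]_n -> R) x y :
  convex_fun f -> (forall z, differentiable f z) ->
  dotv (grad f x) (y - x) <= f y - f x.
Proof.
move=> cf df; rewrite -derive_grad //.
have := @convex_D_le R n f x (y - x) cf (diff_derivable (df x)).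
by rewrite [x + _]addrC subrK.
Qed.

Lemma D_derive (R : realType) (n : nat) (f : 'rV[R]_n -> R)
  (wstar : 'rV[R]_n) (w : R -> 'rV[R]_n) (beta u : R) :
  in_simplex wstar -> derivable w u 1 -> in_int_simplex (w u) ->
  w^`() u = cs_field beta f (w u) ->
  is_derive u (1:R) (fun y => rel_entropy wstar (w y))
    (beta * (\sum_i wstar 0 i * grad f (w u) 0 i - dotv (w u) (grad f (w u)))).
Proof.
move=> [sws pws] dw [_ pw] weq.
pose h (i : 'I_n) := fun y => if wstar 0 i != 0 then wstar 0 i * ln (wstar 0 i / w y 0 i) else 0.
have -> : (fun y => rel_entropy wstar (w y)) = \sum_(i < n) h i.
  by rewrite fct_sumE; apply/funext => y; rewrite /rel_entropy big_mkcond.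
pose dh (i : 'I_n) := if wstar 0 i != 0 then - (wstar 0 i * ((w^`()%classic u) 0 i) / w u 0 i) else 0.
have H : forall i, is_derive u (1:R) (h i) (dh i).
  move=> i; rewrite /h /dh; have [P|nP] := boolP (wstar 0 i != 0).
    apply: term_derive => //; rewrite lt_neqAle eq_sym P pws //.
  exact: is_derive_cst.
apply: is_derive_eq (is_derive_sum H) _.
rewrite /dh -big_mkcond /= weq.
rewrite (big_rmcond (fun i => wstar 0 i != 0)); last first.
  by move=> i; rewrite negbK => /eqP ->; rewrite mul0r mul0r oppr0.
rewrite /dotv mulrBr mulr_sumr.
have -> : beta * \sum_i w u 0 i * grad f (w u) 0 i = \sum_i wstar 0 i * (beta * \sum_i w u 0 i * grad f (w u) 0 i).
  by rewrite -mulr_suml sws mul1r.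
rewrite -sumrB; apply: eq_bigr => i _.
rewrite mxE.
have wn := lt0r_neq0 (pw i).
rewrite /dotv; field.
exact: wn.
Qed.

Theorem theorem4p2 (R : realType) (n : nat) (f : 'rV[R]_n -> R)
  (wstar : 'rV[R]_n) (w : R -> 'rV[R]_n) (beta a b : R) :
  convex_fun f -> C1_fun f ->
  in_simplex wstar -> (forall v, in_simplex v -> f wstar <= f v) ->
  0 < beta ->
  (forall t, a < t < b -> derivable w t 1) ->
  (forall t, a < t < b -> {for t, continuous (w^`())}) ->
  (forall t, a < t < b -> w^`() t = cs_field beta f (w t)) ->
  forall s t, a < s -> s <= t -> t < b ->
    (forall u, s <= u <= t -> in_int_simplex (w u)) ->
    rel_entropy wstar (w t) <= rel_entropy wstar (w s).
Proof.
move=> cf [df _] sws minws bp dw _ weq s t aS st tb ints.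
have key : forall u, s <= u <= t ->
  exists d, is_derive u (1:R) (fun y => rel_entropy wstar (w y)) d /\ d <= 0.
  move=> u /andP[su ut].
  have abu : a < u < b by rewrite (lt_le_trans aS su) (le_lt_trans ut tb).
  have iu : in_int_simplex (w u) by apply: ints; rewrite su ut.
  eexists; split; first exact: (@D_derive R n f wstar w beta u sws (dw u abu) iu (weq u abu)).
  rewrite pmulr_rle0 //.
  have := @grad_ineq R n f (w u) wstar cf df.
  have -> : dotv (grad f (w u)) (wstar - w u) =
     \sum_i wstar 0 i * grad f (w u) 0 i - dotv (w u) (grad f (w u)).
    rewrite /dotv -sumrB; apply: eq_bigr => i _; rewrite !mxE; ring.
  move=> H; apply: (le_trans H); rewrite subr_le0; apply: minws.
  by case: iu => s1 p1; split => // i; exact: ltW.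
have kd : forall u, s <= u <= t -> derivable (fun y => rel_entropy wstar (w y)) u 1.
  by move=> u /key [d [H _]]; exact: ex_derive.
apply: (@ler0_derive1_le_cc R (fun y => rel_entropy wstar (w y)) s t).
- by move=> x; rewrite in_itv /= => /andP[sx xt]; apply: kd; rewrite !ltW.
- move=> x; rewrite in_itv /= => /andP[sx xt].
  have [d [H dl]] : exists d, is_derive x (1:R) (fun y => rel_entropy wstar (w y)) d /\ d <= 0.
    by apply: key; rewrite !ltW.
  by rewrite derive1E derive_val.
- by apply: derivable_within_continuous => x; rewrite in_itv /=; exact: kd.
- by rewrite in_itv /= lexx st.
- by rewrite in_itv /= lexx st.
- exact: st.
Qed.
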